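(* Let $q=2^t$. Let $p$ be a point of $\ell_0$ and let $\ell,\ell'$ be two distinct lines of $L$, both different from $\ell_0$, each passing through $p$. Then $\chi_\ell+\chi_{\ell'}\in C(P,L_1)$.
   Context: Let $q$ be a prime power and $V$ a $4$-dimensional vector space over $\mathbb{F}_q$ with a nonsingular alternating bilinear form $(\cdot,\cdot)$ and symplectic basis $e_0,e_1,e_2,e_3$ with $(e_0,e_3)=(e_1,e_2)=1$. $P$ is the set of $1$-dimensional subspaces of $V$ (points), $L$ the set of totally isotropic $2$-dimensional subspaces (lines), with incidence by containment. $\ell_0=\langle e_0,e_1\rangle$, and $L_1$ is the set of lines sharing no point with $\ell_0$. $\mathbb{F}_2[P]$ is the $\mathbb{F}_2$-vector space of functions $P\to\mathbb{F}_2$; for a line $\ell$, $\chi_\ell\in\mathbb{F}_2[P]$ is its characteristic function (value $1$ exactly at the $q+1$ points of $\ell$). For a set $S$ of lines, $C(P,S)$ is the $\mathbb{F}_2$-span of $\{\chi_\ell:\ell\in S\}$ in $\mathbb{F}_2[P]$. *)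

(* Defs.v *)
From HB Require Import structures.
From mathcomp Require Import all_boot all_order all_algebra.
Set Implicit Arguments. Unset Strict Implicit. Unset Printing Implicit Defensive.
Import GRing.Theory.
Local Open Scope ring_scope.

Section W2.
Variable F : finFieldType.

(* V = F^4 as row vectors; subspaces are represented by their canonical
   square matrix <<U>>%MS (so equal subspaces are equal objects). *)
Definition vec := 'rV[F]_4.
Definition e (i : nat) : vec := delta_mx 0 (inord i).

Definition sform (u v : vec) : F :=
  u 0 (inord 0) * v 0 (inord 3) - u 0 (inord 3) * v 0 (inord 0)
  + u 0 (inord 1) * v 0 (inord 2) - u 0 (inord 2) * v 0 (inord 1).

Definition is_point (U : 'M[F]_4) : bool := (<<U>>%MS == U) && (\rank U == 1)%N.
Definition point := {U : 'M[F]_4 | is_point U}.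

Definition is_line (U : 'M[F]_4) : bool :=
  [&& <<U>>%MS == U, \rank U == 2%N &
      [forall u : vec, forall v : vec,
          ((u <= U)%MS && (v <= U)%MS) ==> (sform u v == 0)]].

Definition lines : {set 'M[F]_4} := [set U | is_line U].

Definition incid (p : point) (l : 'M[F]_4) : bool := (val p <= l)%MS.

Definition ell0 : 'M[F]_4 := <<col_mx (e 0) (e 1)>>%MS.

Definition L1 : {set 'M[F]_4} :=
  [set l in lines | [forall p : point, ~~ (incid p l && incid p ell0)]].

Local Notation F2P := {ffun point -> 'F_2}.

Definition chi (l : 'M[F]_4) : F2P := [ffun p => (incid p l)%:R].

Definition inC (S : {set 'M[F]_4}) (f : F2P) : Prop :=
  exists c : 'M[F]_4 -> 'F_2, f = \sum_(l in S) [ffun x => c l * chi l x].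

End W2.
Notation F2P F := {ffun point F -> 'F_2}.

(* Main.v *)
Require Import Defs.
From HB Require Import structures.
From mathcomp Require Import all_boot all_order all_algebra finfield.
From Stdlib Require Import Ring_theory Ring Field_theory Field.
Import GRing.Theory.

Section Abs.
Variables (R : Type) (rO rI : R) (radd rmul : R -> R -> R) (ropp rinv : R -> R).
Let rsub x y := radd x (ropp y).
Let rdiv x y := rmul x (rinv y).
Hypothesis Fth : field_theory rO rI radd rmul rsub ropp rdiv rinv (@eq R).
Definition phib (b : bool) : R := if b then rI else rO.
Hypothesis Fmorph : ring_morph rO rI radd rmul rsub ropp (@eq R)
   false true xorb andb xorb (fun b => b) Bool.eqb phib.
Ltac bcst t := match t with
  | rO => constr:(false) | rI => constr:(true) | phib ?b => b | _ => constr:(NotConstant) end.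
Add Field Fab : Fth (morphism Fmorph, constants [bcst]).
Local Infix "+" := radd. Local Infix "*" := rmul. Local Notation "x / y" := (rdiv x y).
Local Notation "x - y" := (rsub x y). Local Notation "- x" := (ropp x).
Local Notation "0" := rO. Local Notation "1" := rI.

Lemma eq_add0 (x y : R) : x + y = 0 -> x = y.
Proof. intros H. transitivity (x + y + y). ring. rewrite H; ring. Qed.

Lemma add_sub (x y : R) : x - y = x + y.
Proof. ring. Qed.

(* isotropy of constructed lines *)
Lemma A1 a b c u2 u3 v2 v3 :
  (u2*a+u3*c)*v3 - u3*(v2*a+v3*c) + (u2*b+u3*a)*v2 - u2*(v2*b+v3*a) = 0.
Proof. ring. Qed.

Variables d0 d1 g0 g1 : R.
Hypothesis gd : g0*d0 + g1*d1 = 1.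

Lemma A3 u2 u3 : u2*d1 + u3*d0 = 0 ->
  u2 = (u2*g0 + u3*g1) * d0 /\ u3 = (u2*g0 + u3*g1) * d1.
Proof.
intros k; split; apply eq_add0.
- transitivity (u2 * (1 + (g0*d0 + g1*d1)) + g1 * (u2*d1 + u3*d0)). ring.
  rewrite gd k; ring.
- transitivity (u3 * (1 + (g0*d0 + g1*d1)) + g0 * (u2*d1 + u3*d0)). ring.
  rewrite gd k; ring.
Qed.

Lemma A2 eta th s u2 u3 : eta <> 0 -> u2*d1 + u3*d0 <> 0 ->
  u2 * (th * g0 * g1 + s + s * s * d0 * d1 / eta) + u3 * (th * g1 * g1 + s * s * d0 * d0 / eta)
  = u2 * ((th + eta) * g0 * g1 + (s + eta * (u2*g0 + u3*g1) / (u2*d1 + u3*d0))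
          + (s + eta * (u2*g0 + u3*g1) / (u2*d1 + u3*d0)) * (s + eta * (u2*g0 + u3*g1) / (u2*d1 + u3*d0)) * d0 * d1 / eta)
  + u3 * ((th + eta) * g1 * g1 + (s + eta * (u2*g0 + u3*g1) / (u2*d1 + u3*d0)) * (s + eta * (u2*g0 + u3*g1) / (u2*d1 + u3*d0)) * d0 * d0 / eta)
  /\
  u2 * (th * g0 * g0 + s * s * d1 * d1 / eta) + u3 * (th * g0 * g1 + s + s * s * d0 * d1 / eta)
  = u2 * ((th + eta) * g0 * g0 + (s + eta * (u2*g0 + u3*g1) / (u2*d1 + u3*d0)) * (s + eta * (u2*g0 + u3*g1) / (u2*d1 + u3*d0)) * d1 * d1 / eta)
  + u3 * ((th + eta) * g0 * g1 + (s + eta * (u2*g0 + u3*g1) / (u2*d1 + u3*d0))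
          + (s + eta * (u2*g0 + u3*g1) / (u2*d1 + u3*d0)) * (s + eta * (u2*g0 + u3*g1) / (u2*d1 + u3*d0)) * d0 * d1 / eta).
Proof.
intros He Hk; split; apply eq_add0.
- transitivity (eta * (u2*g0 + u3*g1) / (u2*d1 + u3*d0) * u2 * (g0*d0 + g1*d1 + 1)).
  field; auto. rewrite gd; ring.
- transitivity (eta * (u2*g0 + u3*g1) / (u2*d1 + u3*d0) * u3 * (g0*d0 + g1*d1 + 1)).
  field; auto. rewrite gd; ring.
Qed.

Lemma A4 eta th s mu : eta <> 0 ->
  (mu*d0) * (th * g0 * g1 + s + s * s * d0 * d1 / eta) + (mu*d1) * (th * g1 * g1 + s * s * d0 * d0 / eta)
    = mu * (th * g1 + s * d0) /\
  (mu*d0) * (th * g0 * g0 + s * s * d1 * d1 / eta) + (mu*d1) * (th * g0 * g1 + s + s * s * d0 * d1 / eta)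
    = mu * (th * g0 + s * d1).
Proof.
intros He; split; apply eq_add0.
- transitivity (mu * th * g1 * (g0*d0 + g1*d1 + 1)). field; auto. rewrite gd; ring.
- transitivity (mu * th * g0 * (g0*d0 + g1*d1 + 1)). field; auto. rewrite gd; ring.
Qed.

Lemma A5a th s mu u0 u1 : mu <> 0 ->
  u0 = mu * (th * g1 + s * d0) -> u1 = mu * (th * g0 + s * d1) ->
  s = (u0 / mu + th * g1) * g0 + (u1 / mu + th * g0) * g1 /\ u0 * d1 + u1 * d0 = mu * th.
Proof.
intros Hm E0 E1; subst u0 u1; split.
- apply eq_add0. transitivity (s * (g0*d0 + g1*d1 + 1)). field; auto. rewrite gd; ring.
- apply eq_add0. transitivity (mu * th * (g0*d0 + g1*d1 + 1)). ring. rewrite gd; ring.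
Qed.

Lemma A5b th mu u0 u1 : mu <> 0 -> u0 * d1 + u1 * d0 = mu * th ->
  u0 = mu * (th * g1 + ((u0 / mu + th * g1) * g0 + (u1 / mu + th * g0) * g1) * d0) /\
  u1 = mu * (th * g0 + ((u0 / mu + th * g1) * g0 + (u1 / mu + th * g0) * g1) * d1).
Proof.
intros Hm C; split; apply eq_add0.
- transitivity (u0 * (1 + (g0*d0 + g1*d1)) + g1 * (u0 * d1 + u1 * d0 + mu * th)). field; auto.
  rewrite gd C; ring.
- transitivity (u1 * (1 + (g0*d0 + g1*d1)) + g0 * (u0 * d1 + u1 * d0 + mu * th)). field; auto.
  rewrite gd C; ring.
Qed.

(* characterization of a line through p *)
Lemma A6 mu rho z0 z1 u0 u1 : mu <> 0 ->
  u0 * (mu * d1) - (rho * d1) * z0 + u1 * (mu * d0) - (rho * d0) * z1 = 0 ->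
  u0 * d1 + u1 * d0 = (z0 * d1 + z1 * d0) / mu * rho.
Proof.
intros Hm E. apply eq_add0.
transitivity ((u0 * (mu * d1) - (rho * d1) * z0 + u1 * (mu * d0) - (rho * d0) * z1) / mu).
field; auto. rewrite E; field; auto.
Qed.

Lemma A7 mu rho z0 z1 u0 u1 : mu <> 0 ->
  u0 * d1 + u1 * d0 = (z0 * d1 + z1 * d0) / mu * rho ->
  let al := (u0 - rho / mu * z0) * g0 + (u1 - rho / mu * z1) * g1 in
  u0 = al * d0 + rho / mu * z0 /\ u1 = al * d1 + rho / mu * z1.
Proof.
intros Hm C al; unfold al; split; apply eq_add0.
- transitivity ((u0 - rho / mu * z0) * (1 + (g0*d0 + g1*d1)) + g1 * (u0 * d1 + u1 * d0 + (z0 * d1 + z1 * d0) / mu * rho)).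
  field; auto. rewrite gd C; ring.
- transitivity ((u1 - rho / mu * z1) * (1 + (g0*d0 + g1*d1)) + g0 * (u0 * d1 + u1 * d0 + (z0 * d1 + z1 * d0) / mu * rho)).
  field; auto. rewrite gd C; ring.
Qed.

End Abs.

Local Open Scope ring_scope.

Section Conc.
Variable F : fieldType.
Hypothesis two0 : (1 + 1 : F) = 0.

Lemma FthF : field_theory (0:F) 1 +%R *%R (fun x y => x + - y) -%R (fun x y => x * y^-1) GRing.inv (@eq F).
Proof.
constructor.
- constructor; [exact: add0r|exact: addrC|exact: addrA|exact: mul1r|exact: mulrC|exact: mulrA|exact: mulrDl|by []|exact: subrr].
- exact/eqP/oner_neq0.
- by [].
- by move=> x /eqP; exact: mulVf.
Qed.

Lemma oppxF (x : F) : - x = x.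
Proof. by apply/eqP; rewrite eq_sym -subr_eq0 opprK -[x + x]mul1r mulrDr -mulrDl two0 mul0r. Qed.

Lemma FmorphF : ring_morph (0:F) 1 +%R *%R (fun x y => x + - y) -%R (@eq F)
   false true xorb andb xorb (fun b => b) Bool.eqb (phib F 0 1).
Proof.
split=> //.
- by case; case => /=; rewrite ?addr0 ?add0r ?two0.
- by case; case => /=; rewrite ?subrr ?subr0 ?sub0r ?oppxF ?oppr0 ?addr0 ?add0r ?two0.
- by case; case => /=; rewrite ?mulr1 ?mulr0 ?mul0r.
- by case => /=; rewrite ?oppxF ?oppr0.
- by case; case.
Qed.

End Conc.

Section Geo.
Variable F : finFieldType.
Hypothesis two0 : (1 + 1 : F) = 0.

Definition co (u : 'rV[F]_4) (i : nat) : F := u 0 (inord i).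

Lemma row4P (u v : 'rV[F]_4) : co u 0 = co v 0 -> co u 1 = co v 1 ->
  co u 2 = co v 2 -> co u 3 = co v 3 -> u = v.
Proof.
move=> h0 h1 h2 h3; apply/rowP => j; rewrite -[j]inord_val.
by case: j => [] [|[|[|[|n]]]] Hj //=.
Qed.

Definition mkB (a b c : F) : 'M[F]_(2,4) :=
  \matrix_(i < 2, j < 4) (if i == 0 :> nat then nth 0 [:: a; b; 1; 0] j else nth 0 [:: c; a; 0; 1] j).

Lemma L_sub (u : 'rV[F]_4) a b c : (u <= mkB a b c)%MS =
  (co u 0 == co u 2 * a + co u 3 * c) && (co u 1 == co u 2 * b + co u 3 * a).
Proof.
apply/idP/idP.
- case/submxP => D ->; rewrite /co !mxE !big_ord_recl !big_ord0 !mxE /= !inordK //=.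
  by rewrite !mulr1 !mulr0 !addr0 !add0r !eqxx.
- move/andP => [/eqP h0 /eqP h1]; apply/submxP.
  exists (\matrix_(i < 1, k < 2) nth 0 [:: co u 2; co u 3] k).
  apply: row4P; rewrite /co !mxE !big_ord_recl !big_ord0 !mxE /= !inordK //=.
  + by rewrite addr0; exact: h0.
  + by rewrite addr0; exact: h1.
  + by rewrite !mulr1 !mulr0 !addr0.
  + by rewrite !mulr1 !mulr0 !addr0 add0r.
Qed.


Lemma inord4 i j : (i < 4)%N -> (j < 4)%N -> (inord i == inord j :> 'I_4) = (i == j).
Proof. by move=> hi hj; rewrite -val_eqE /= !inordK. Qed.

Lemma sub_ell0 (u : 'rV[F]_4) : (u <= ell0 F)%MS -> co u 2 = 0 /\ co u 3 = 0.
Proof.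
rewrite /ell0 genmxE -addsmxE => /sub_addsmxP [[x y] ->] /=.
by rewrite /co !mxE !big_ord1 !mxE /e !inord4 //= !mulr0 addr0.
Qed.

Lemma ell0_sub (u : 'rV[F]_4) : co u 2 = 0 -> co u 3 = 0 -> (u <= ell0 F)%MS.
Proof.
move=> h2 h3; rewrite /ell0 genmxE -addsmxE; apply/sub_addsmxP.
exists ((co u 0)%:M, (co u 1)%:M) => /=.
apply: row4P; rewrite /co !mxE !big_ord1 !mxE /e !inord4 //= ?mulr0 ?mulr1 ?addr0 ?add0r //.
Qed.

Lemma point_vec (x : point F) : exists2 u : 'rV[F]_4, u != 0 & (val x :=: u)%MS.
Proof.
case: x => X /andP [_ /eqP rk1] /=.
case: (pickP (fun i => row i X != 0)) => [i Hi|H].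
  exists (row i X) => //; apply/eqmxP; rewrite row_sub andbT.
  by rewrite -(mxrank_leqif_sup (row_sub i X)).2 rank_rV Hi rk1.
have X0 : X = 0 by apply/row_matrixP => i; move/negbFE: (H i) => /eqP ->; rewrite linear0.
by move: rk1; rewrite X0 mxrank0.
Qed.

Lemma rank_mkB a b c : \rank (mkB a b c) = 2.
Proof.
apply/eqP; rewrite eqn_leq rank_leq_row /=.
pose P : 'M[F]_(4,2) := \matrix_(i < 4, j < 2) ((i : nat) == (j : nat) + 2)%N%:R.
have <- : \rank (mkB a b c *m P) = 2.
  suff -> : mkB a b c *m P = 1%:M by rewrite mxrank1.
  apply/matrixP => i j; rewrite !mxE !big_ord_recl big_ord0 !mxE /=.
  case: i => [] [|[|i]] Hi //; case: j => [] [|[|j]] Hj //=;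
    by rewrite ?mulr0 ?mulr1 ?mul0r ?mul1r ?addr0 ?add0r.
exact: mxrankM_maxl.
Qed.

Definition mkL a b c := <<mkB a b c>>%MS.

Lemma mkL_L1 a b c : mkL a b c \in L1 F.
Proof.
rewrite inE; apply/andP; split.
- rewrite inE /is_line /mkL genmx_id eqxx /= genmxE rank_mkB eqxx /=.
  apply/forallP => u; apply/forallP => v; apply/implyP => /andP [].
  rewrite !genmxE !L_sub => /andP [/eqP h0 /eqP h1] /andP [/eqP k0 /eqP k1].
  rewrite /sform -!/(co _ _) h0 h1 k0 k1.
  apply/eqP; exact: (@A1 _ _ _ _ _ _ _ (FthF F) (@FmorphF F two0) a b c (co u 2) (co u 3) (co v 2) (co v 3)).
- apply/forallP => x; apply/negP => /andP [].
  have [u u0 Eu] := point_vec x.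
  rewrite /incid !Eu /mkL genmxE L_sub => /andP [/eqP h0 /eqP h1] /sub_ell0 [h2 h3].
  move: h0 h1; rewrite h2 h3 !mul0r !addr0 => h0 h1.
  by move/eqP: u0; apply; apply: row4P; rewrite ?h0 ?h1 ?h2 ?h3 /co mxE.
Qed.



Let eq_add0F := @eq_add0 _ _ _ _ _ _ _ (FthF F) (@FmorphF F two0).
Let A3F := @A3 _ _ _ _ _ _ _ (FthF F) (@FmorphF F two0).
Let A6F := @A6 _ _ _ _ _ _ _ (FthF F) (@FmorphF F two0).
Let A7F := @A7 _ _ _ _ _ _ _ (FthF F) (@FmorphF F two0).

Lemma oppF (x : F) : - x = x.
Proof. exact: oppxF. Qed.

Lemma iso_line (l : 'M[F]_4) : is_line l -> forall u v : 'rV_4,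
  (u <= l)%MS -> (v <= l)%MS -> sform u v = 0.
Proof.
case/and3P => _ _ /forallP H u v Hu Hv.
by move: (H u) => /forallP /(_ v) /implyP; rewrite Hu Hv => /(_ isT) /eqP.
Qed.

Lemma line_z (l : 'M[F]_4) : is_line l -> l != ell0 F ->
  exists2 z : 'rV_4, (z <= l)%MS & ~~ ((co z 2 == 0) && (co z 3 == 0)).
Proof.
move=> Hl Hl0.
case: (pickP (fun z : 'rV[F]_4 => (z <= l)%MS && ~~ ((co z 2 == 0) && (co z 3 == 0)))).
  by move=> z /andP [H1 H2]; exists z.
move=> H; exfalso; move/negP: Hl0; apply.
have sub : (l <= ell0 F)%MS.
  apply/rV_subP => z Hz; move: (H z); rewrite Hz /= => /negbFE/andP [/eqP h2 /eqP h3].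
  exact: ell0_sub.
case/and3P: Hl => /eqP gl /eqP rl _.
have Heq : (l == ell0 F)%MS.
  rewrite -(mxrank_leqif_eq sub).2 rl eqn_leq -{1}rl mxrankS //=.
  by rewrite /ell0 genmxE rank_leq_row.
by move/genmxP: Heq; rewrite gl /ell0 genmx_id => ->.
Qed.

Lemma line_char (pv : 'rV[F]_4) (g0 g1 : F) (l : 'M[F]_4) :
  co pv 2 = 0 -> co pv 3 = 0 -> g0 * co pv 0 + g1 * co pv 1 = 1 ->
  is_line l -> l != ell0 F -> (pv <= l)%MS ->
  exists th : F, forall u : 'rV_4, (u <= l)%MS =
     (co u 2 * co pv 1 + co u 3 * co pv 0 == 0) &&
     (co u 0 * co pv 1 + co u 1 * co pv 0 == th * (co u 2 * g0 + co u 3 * g1)).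
Proof.
move=> p2 p3 gd Hl Hl0 Hp.
have iso := iso_line l Hl.
have [z Hz Hz23] := line_z l Hl Hl0.
set d0 := co pv 0; set d1 := co pv 1.
have kz : co z 2 * d1 + co z 3 * d0 = 0.
  move: (iso _ _ Hp Hz); rewrite /sform -!/(co _ _) p2 p3 !mul0r !subr0.
  by rewrite addrC (mulrC d1) (mulrC d0).
have [z2E z3E] := A3F _ _ _ _ gd _ _ kz.
set mu := co z 2 * g0 + co z 3 * g1 in z2E z3E.
have mu0 : mu != 0.
  apply: contraNneq Hz23 => m0; move: z2E z3E; rewrite m0 !mul0r => -> ->.
  by rewrite eqxx.
have mu0' : mu <> 0 by apply/eqP.
exists ((co z 0 * d1 + co z 1 * d0) / mu) => u.
apply/idP/idP.
- move=> Hu.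
  have ku : co u 2 * d1 + co u 3 * d0 = 0.
    move: (iso _ _ Hu Hp); rewrite /sform -!/(co _ _) p2 p3 !mulr0 sub0r addr0 !oppF => E.
    by rewrite addrC.
  rewrite ku eqxx /=.
  have [u2E u3E] := A3F _ _ _ _ gd _ _ ku.
  set rho := co u 2 * g0 + co u 3 * g1 in u2E u3E *.
  have := iso _ _ Hu Hz; rewrite /sform -!/(co _ _) z2E z3E u2E u3E => E.
  apply/eqP.
  exact: (A6F d0 d1 mu rho (co z 0) (co z 1) (co u 0) (co u 1) mu0' E).
- case/andP => /eqP ku /eqP C.
  have [u2E u3E] := A3F _ _ _ _ gd _ _ ku.
  set rho := co u 2 * g0 + co u 3 * g1 in u2E u3E C.
  have [E0 E1] := A7F _ _ _ _ gd _ _ _ _ _ _ mu0' C.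
  set al := _ * g0 + _ * g1 in E0 E1.
  have -> : u = al *: pv + (rho / mu) *: z.
    apply: row4P; rewrite /co !mxE -!/(co _ _) -/d0 -/d1.
    + exact: E0.
    + exact: E1.
    + by rewrite p2 mulr0 add0r z2E mulrA divfK.
    + by rewrite p3 mulr0 add0r z3E mulrA divfK.
  by rewrite addmx_sub // scalemx_sub.
Qed.


Let A2F := @A2 _ _ _ _ _ _ _ (FthF F) (@FmorphF F two0).
Let A4F := @A4 _ _ _ _ _ _ _ (FthF F) (@FmorphF F two0).
Let A5aF := @A5a _ _ _ _ _ _ _ (FthF F) (@FmorphF F two0).
Let A5bF := @A5b _ _ _ _ _ _ _ (FthF F) (@FmorphF F two0).

Lemma F2xx (x : 'F_2) : x + x = 0.
Proof. by rewrite -mulr2n -mulr_natl (pcharf0 (pchar_Fp (isT : prime 2))) mul0r. Qed.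

Lemma sum_uniq (P : F -> bool) s0 b : (forall s, P s = (s == s0) && b) ->
  \sum_(s : F) (P s)%:R = b%:R :> 'F_2.
Proof.
move=> H; rewrite (eq_bigr (fun s => ((s == s0) && b)%:R)) => [|s _]; last by rewrite H.
by rewrite (bigD1 s0) //= eqxx big1 ?addr0 // => s /negbTE ->.
Qed.

Lemma sum_L1 (f f' : F -> 'M[F]_4) (x : point F) :
  (forall s, f s \in L1 F) -> (forall s, f' s \in L1 F) ->
  \sum_(m in L1 F) (\sum_(s : F) ((m == f s)%:R + (m == f' s)%:R)) * chi m x
  = \sum_(s : F) (chi (f s) x + chi (f' s) x).
Proof.
move=> Hf Hf'.
under eq_bigr do rewrite mulr_suml.
rewrite exchange_big /=; apply: eq_bigr => s _.
under eq_bigr do rewrite mulrDl.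
rewrite big_split /=; congr (_ + _).
- rewrite (bigD1 (f s)) ?Hf //= eqxx mul1r big1 ?addr0 // => m /andP [_ /negbTE ->].
  by rewrite mul0r.
- rewrite (bigD1 (f' s)) ?Hf' //= eqxx mul1r big1 ?addr0 // => m /andP [_ /negbTE ->].
  by rewrite mul0r.
Qed.

Lemma main_aux (p : point F) (l l' : 'M[F]_4) :
  is_line l -> is_line l' -> l != ell0 F -> l' != ell0 F ->
  incid p (ell0 F) -> incid p l -> incid p l' ->
  inC (L1 F) (chi l + chi l').
Proof.
move=> Hl Hl' Hl0 Hl0' Hp0 Hpl Hpl'.
have [pv pv0 Ep] := point_vec p.
move: Hp0 Hpl Hpl'; rewrite /incid !Ep => Hp0 Hpl Hpl'.
have [p2 p3] := sub_ell0 pv Hp0.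
have [g0 [g1 gd]] : exists g0 g1, g0 * co pv 0 + g1 * co pv 1 = 1.
  case: (eqVneq (co pv 0) 0) => [d00|d0n].
  - have d1n : co pv 1 != 0.
      apply: contraNneq pv0 => d10; apply/eqP; apply: row4P; rewrite ?d00 ?d10 ?p2 ?p3 /co mxE //.
    by exists 0, (co pv 1)^-1; rewrite mul0r add0r mulVf.
  - by exists (co pv 0)^-1, 0; rewrite mulVf // mul0r addr0.
have [th Hth] := line_char pv g0 g1 l p2 p3 gd Hl Hl0 Hpl.
have [th' Hth'] := line_char pv g0 g1 l' p2 p3 gd Hl' Hl0' Hpl'.
set d0 := co pv 0 in gd Hth Hth'; set d1 := co pv 1 in gd Hth Hth'.
case: (eqVneq th th') Hth' => [<-|thn] Hth'.
  exists (fun _ => 0); apply/ffunP => x; rewrite !ffunE sum_ffunE big1 => [|m _]; last first.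
    by rewrite ffunE mul0r.
  have [u _ Eu] := point_vec x.
  rewrite /incid !Eu Hth' Hth; exact: F2xx.
have xx : forall y : F, y + y = 0 by move=> y; rewrite -{2}[y]oppF subrr.
have eta0 : th + th' != 0.
  by apply/eqP => E; move/eqP: thn; apply; exact: (eq_add0F th th' E).
set eta := th + th' in eta0.
have Eth' : th' = th + eta by rewrite /eta addrA xx add0r.
have eta0' : eta <> 0 by apply/eqP.
pose va t s := t * g0 * g1 + s + s * s * d0 * d1 / eta.
pose vb t s := t * g0 * g0 + s * s * d1 * d1 / eta.
pose vc t s := t * g1 * g1 + s * s * d0 * d0 / eta.
pose Lf t s := mkL (va t s) (vb t s) (vc t s).
exists (fun m => \sum_(s : F) ((m == Lf th s)%:R + (m == Lf th' s)%:R)).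
apply/ffunP => x; rewrite !ffunE sum_ffunE.
under eq_bigr do rewrite ffunE.
rewrite (@sum_L1 (Lf th) (Lf th') x (fun s => mkL_L1 _ _ _) (fun s => mkL_L1 _ _ _)) big_split /=.
have [u u0 Eu] := point_vec x.
pose P t s := (co u 0 == co u 2 * va t s + co u 3 * vc t s) && (co u 1 == co u 2 * vb t s + co u 3 * va t s).
have chiLf : forall t s, chi (Lf t s) x = (P t s)%:R.
  by move=> t s; rewrite ffunE /incid Eu /Lf /mkL genmxE L_sub.
rewrite (eq_bigr _ (fun s _ => chiLf th s)) (eq_bigr _ (fun s _ => chiLf th' s)).
rewrite /incid !Eu Hth Hth'.
case: (eqVneq (co u 2 * d1 + co u 3 * d0) 0) => [k0|kn].
- rewrite /=.
  have [u2E u3E] := A3F d0 d1 g0 g1 gd _ _ k0.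
  set rho := co u 2 * g0 + co u 3 * g1 in u2E u3E *.
  case: (eqVneq rho 0) => [r0|rn].
  + have Pf : forall t s, P t s = false.
      move=> t s; rewrite /P u2E u3E r0 !mul0r !add0r.
      apply/negbTE; apply: contra u0 => /andP [/eqP h0 /eqP h1].
      apply/eqP; apply: row4P; rewrite ?h0 ?h1 ?u2E ?u3E ?r0 ?mul0r /co mxE //.
    have Z : forall t, \sum_(s : F) (P t s)%:R = 0 :> 'F_2.
      by move=> t; apply: big1 => s _; rewrite Pf.
    rewrite !Z r0 !mulr0 addr0; exact: F2xx.
  + have rn' : rho <> 0 by apply/eqP.
    have Hs : forall t, \sum_(s : F) (P t s)%:R = (co u 0 * d1 + co u 1 * d0 == rho * t)%:R :> 'F_2.
      move=> t; apply: (sum_uniq _ ((co u 0 / rho + t * g1) * g0 + (co u 1 / rho + t * g0) * g1)) => s.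
      have [E1 E2] := A4F d0 d1 g0 g1 gd eta t s rho eta0'.
      rewrite /P u2E u3E /va /vb /vc E1 E2.
      apply/idP/idP.
      * case/andP => /eqP e0 /eqP e1.
        have [Hs Hc] := A5aF d0 d1 g0 g1 gd t s rho (co u 0) (co u 1) rn' e0 e1.
        by rewrite -Hs Hc !eqxx.
      * case/andP => /eqP -> /eqP C.
        have [e0 e1] := A5bF d0 d1 g0 g1 gd t rho (co u 0) (co u 1) rn' C.
        by apply/andP; split; apply/eqP.
    by rewrite !Hs (mulrC th) (mulrC th').
- have kn' : co u 2 * d1 + co u 3 * d0 <> 0 by apply/eqP.
  rewrite /=.
  have -> : \sum_(s : F) (P th' s)%:R = \sum_(s : F) (P th s)%:R :> 'F_2.
    rewrite (reindex_inj (addIr (eta * (co u 2 * g0 + co u 3 * g1) / (co u 2 * d1 + co u 3 * d0)))) /=.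
    apply: eq_bigr => s _.
    have [E1 E2] := A2F d0 d1 g0 g1 gd eta th s (co u 2) (co u 3) eta0' kn'.
    by rewrite /P /va /vb /vc E1 E2 Eth'.
  transitivity (0 : 'F_2); first exact: F2xx.
  symmetry; exact: F2xx.
Qed.


End Geo.

Theorem lemma5 (t : nat) (F : finFieldType) (hq : #|F| = (2 ^ t)%N)
  (p : point F) (l l' : 'M[F]_4) :
  is_line l -> is_line l' -> l != l' -> l != ell0 F -> l' != ell0 F ->
  incid p (ell0 F) -> incid p l -> incid p l' ->
  inC (L1 F) (chi l + chi l').
Proof.
move=> Hl Hl' _ Hl0 Hl0' Hp0 Hpl Hpl'.
have two0 : (1 + 1 : F) = 0.
  by have := pcharf0 (card_finPcharP hq (isT : prime 2)); rewrite mulr2n.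
exact: (@main_aux F two0 p l l' Hl Hl' Hl0 Hl0' Hp0 Hpl Hpl').
Qed.
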